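(* Let $A,A^*\in\mathrm{Mat}_{d+1}(\mathbb K)$ be as in the setup below. Then $A,A^*$ is a Leonard pair if and only if there exists an invertible $H\in\mathrm{Mat}_{d+1}(\mathbb K)$ such that $H^{-1}A^tH=A$ and $H^{-1}A^{*t}H=A^*$, where ${}^t$ denotes transpose.
   Context: Let $\mathbb K$ be a field and $d\ge0$ an integer; rows/columns are indexed $0,\ldots,d$. Let $\theta_0,\ldots,\theta_d\in\mathbb K$ be mutually distinct, $\theta^*_0,\ldots,\theta^*_d\in\mathbb K$ mutually distinct, and $\varphi_1,\ldots,\varphi_d\in\mathbb K$ nonzero. Let $A\in\mathrm{Mat}_{d+1}(\mathbb K)$ be lower bidiagonal with $A_{ii}=\theta_i$, $A_{i+1,i}=1$ and all other entries $0$; let $A^*$ be upper bidiagonal with $A^*_{ii}=\theta^*_i$, $A^*_{i-1,i}=\varphi_i$ and all other entries $0$ ($A^*$ is just a name, not an adjoint). A square matrix is tridiagonal if every nonzero entry lies on the diagonal, subdiagonal or superdiagonal, and irreducible tridiagonal if moreover all sub- and superdiagonal entries are nonzero. $A,A^*$ is a Leonard pair if there is a basis of $\mathbb K^{d+1}$ in which $A$ is represented by an irreducible tridiagonal matrix and $A^*$ by a diagonal one, and a basis in which $A^*$ is irreducible tridiagonal and $A$ diagonal. *)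

(* Defs.v *)
From HB Require Import structures.
From mathcomp Require Import all_boot all_order all_algebra.
Set Implicit Arguments. Unset Strict Implicit. Unset Printing Implicit Defensive.
Import GRing.Theory.
Local Open Scope ring_scope.

(* Indices 0..d are 'I_d.+1. Matrices act on column vectors; the matrix
   representing M in the basis given by the columns of an invertible P
   is  invmx P *m M *m P. *)

Definition matA (K : fieldType) (d : nat) (theta : 'I_d.+1 -> K) : 'M[K]_d.+1 :=
  \matrix_(i, j) (if i == j then theta i
                  else if (i : nat) == j.+1 then 1 else 0).

(* Upper bidiagonal A*: A*_ii = thetas_i, A*_{i-1,i} = phi_i (phi indexed 1..d). *)
Definition matAs (K : fieldType) (d : nat) (thetas : 'I_d.+1 -> K)
    (phi : nat -> K) : 'M[K]_d.+1 :=
  \matrix_(i, j) (if i == j then thetas i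
                  else if (j : nat) == i.+1 then phi j else 0).

Definition tridiagonal (K : fieldType) (n : nat) (M : 'M[K]_n) : Prop :=
  forall i j : 'I_n, (j.+1 < i)%N \/ (i.+1 < j)%N -> M i j = 0.

Definition irreducible_tridiagonal (K : fieldType) (n : nat) (M : 'M[K]_n) : Prop :=
  tridiagonal M /\
  forall i j : 'I_n, (i : nat) = j.+1 -> M i j != 0 /\ M j i != 0.

Definition diagonal (K : fieldType) (n : nat) (M : 'M[K]_n) : Prop :=
  is_diag_mx M.

Definition leonard_pair (K : fieldType) (n : nat) (A As : 'M[K]_n) : Prop :=
  (exists P : 'M[K]_n, P \in unitmx /\
     irreducible_tridiagonal (invmx P *m A *m P) /\ diagonal (invmx P *m As *m P)) /\
  (exists Q : 'M[K]_n, Q \in unitmx /\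
     irreducible_tridiagonal (invmx Q *m As *m Q) /\ diagonal (invmx Q *m A *m Q)).

(* Main.v *)
Require Import Defs.
From HB Require Import structures.
From mathcomp Require Import all_boot all_order all_algebra.
From mathcomp Require Import zify ring.
Import GRing.Theory.
Local Open Scope ring_scope.
Set Implicit Arguments. Unset Strict Implicit. Unset Printing Implicit Defensive.

Lemma sum1 (K : fieldType) n (F : 'I_n -> K) k :
  (forall m, m != k -> F m = 0) -> \sum_m F m = F k.
Proof. by move=> H; rewrite (bigD1 k) //= big1 ?addr0 // => m /H. Qed.

Lemma down_ind n (Q : 'I_n -> Prop) :
  (forall k : 'I_n, (forall m : 'I_n, (k < m)%N -> Q m) -> Q k) -> forall k, Q k.
Proof.
move=> IH.
suff H : forall i (k : 'I_n), (n - k <= i)%N -> Q k.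
  by move=> k; apply: (H n); lia.
elim=> [|i IHi] k Hk.
  by exfalso; have := ltn_ord k; lia.
apply: IH => m Hm; apply: IHi; have := ltn_ord m; lia.
Qed.

Definition utri (K : fieldType) n (M : 'M[K]_n) := forall i j : 'I_n, (j < i)%N -> M i j = 0.
Definition hess (K : fieldType) n (M : 'M[K]_n) := forall i j : 'I_n, (j.+1 < i)%N -> M i j = 0.
Definition subd (K : fieldType) n (M : 'M[K]_n) := forall i j : 'I_n, (i : nat) = j.+1 -> M i j != 0.

Lemma det_utri (K : fieldType) n (M : 'M[K]_n) : utri M -> \det M = \prod_i M i i.
Proof.
move=> HM; rewrite -det_tr det_trig; first by apply: eq_bigr => i _; rewrite mxE.
by apply/is_trig_mxP => i j Hij; rewrite mxE HM.
Qed.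

Lemma utri_diag_unit (K : fieldType) n (M : 'M[K]_n) :
  utri M -> M \in unitmx -> forall i, M i i != 0.
Proof.
move=> HM; rewrite unitmxE unitfE det_utri // => /prodf_neq0 H i; exact: H.
Qed.

Lemma utri_unit (K : fieldType) n (M : 'M[K]_n) :
  utri M -> (forall i, M i i != 0) -> M \in unitmx.
Proof.
by move=> HM H; rewrite unitmxE unitfE det_utri //; apply/prodf_neq0 => i _.
Qed.

Lemma inv_utri (K : fieldType) n (U : 'M[K]_n) :
  utri U -> U \in unitmx -> utri (invmx U) /\ forall i, invmx U i i = (U i i)^-1.
Proof.
move=> HU uU; have dU := utri_diag_unit HU uU.
have E : U *m invmx U = 1%:M by rewrite mulmxV.
have S : forall i j, \sum_m U i m * invmx U m j = (i == j)%:R.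
  by move=> i j; have := congr1 (fun M : 'M[K]_n => M i j) E; rewrite !mxE.
have T : utri (invmx U).
  move=> k j; move: k.
  suff: forall k : 'I_n, (fun k : 'I_n => (j < k)%N -> invmx U k j = 0) k by [].
  apply: down_ind => k IH Hjk; have := S k j.
  rewrite (@sum1 _ _ _ k).
    have -> : (k == j) = false by apply/eqP => Ekj; subst; lia.
    by move/eqP; rewrite mulf_eq0 (negPf (dU k)) /= => /eqP.
  move=> m Hm; case: (ltngtP m k) => Hmk.
  - by rewrite HU // mul0r.
  - by rewrite IH ?mulr0 //; lia.
  - by exfalso; move/eqP: Hm; apply; apply: val_inj.
split=> // i; have := S i i; rewrite eqxx (@sum1 _ _ _ i).
  by move=> H; rewrite -[invmx U i i]mul1r -(mulVf (dU i)) -mulrA H mulr1.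
move=> m Hm; case: (ltngtP m i) => Hmk.
- by rewrite HU // mul0r.
- by rewrite T ?mulr0.
- by exfalso; move/eqP: Hm; apply; apply: val_inj.
Qed.

Lemma hess_mulUl (K : fieldType) n (U Y : 'M[K]_n) :
  utri U -> hess Y -> hess (U *m Y) /\
  forall i j : 'I_n, (i : nat) = j.+1 -> (U *m Y) i j = U i i * Y i j.
Proof.
move=> HU HY; split.
  move=> i j Hij; rewrite mxE big1 // => k _.
  case: (ltnP k i) => Hk; first by rewrite HU // mul0r.
  by rewrite HY ?mulr0 //; lia.
move=> i j Hij; rewrite mxE (@sum1 _ _ _ i) // => m Hm.
case: (ltngtP m i) => Hmk.
- by rewrite HU // mul0r.
- by rewrite HY ?mulr0 //; lia.
- by exfalso; move/eqP: Hm; apply; apply: val_inj.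
Qed.

Lemma hess_mulUr (K : fieldType) n (U Y : 'M[K]_n) :
  utri U -> hess Y -> hess (Y *m U) /\
  forall i j : 'I_n, (i : nat) = j.+1 -> (Y *m U) i j = Y i j * U j j.
Proof.
move=> HU HY; split.
  move=> i j Hij; rewrite mxE big1 // => k _.
  case: (ltnP j k) => Hk; first by rewrite HU // mulr0.
  by rewrite HY ?mul0r //; lia.
move=> i j Hij; rewrite mxE (@sum1 _ _ _ j) // => m Hm.
case: (ltngtP m j) => Hmk.
- by rewrite HY ?mul0r //; lia.
- by rewrite HU // mulr0.
- by exfalso; move/eqP: Hm; apply; apply: val_inj.
Qed.

Lemma eigvec (K : fieldType) n (X : 'M[K]_n) (th : 'I_n -> K) :
  injective th -> utri X -> (forall i, X i i = th i) -> forall j,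
  exists v : 'cV[K]_n, [/\ X *m v = th j *: v, v j 0 != 0 & forall m : 'I_n, (j < m)%N -> v m 0 = 0].
Proof.
move=> inj HX dX j.
set M := X - (th j)%:M.
have uM : utri M.
  move=> a b Hab; rewrite !mxE HX //.
  have ->: (a == b) = false by apply/eqP=> E; subst; lia.
  by rewrite mulr0n subrr.
have : \det M^T == 0.
  rewrite det_tr det_utri //; apply/prodf_eq0; exists j => //.
  by rewrite !mxE eqxx dX mulr1n subrr.
case/det0P => w w0 wM.
set v := w^T.
have Xv : X *m v = th j *: v.
  have : (w *m M^T)^T = 0 by rewrite wM trmx0.
  rewrite trmx_mul trmxK /M mulmxBl mul_scalar_mx => /eqP; rewrite subr_eq0 => /eqP ->. done.
have E : forall k, \sum_m X k m * v m 0 = th j * v k 0.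
  by move=> k; have := congr1 (fun N : 'cV[K]_n => N k 0) Xv; rewrite !mxE.
have key : forall k : 'I_n, k != j -> (forall m : 'I_n, (k < m)%N -> v m 0 = 0) -> v k 0 = 0.
  move=> k kj IH; have := E k; rewrite (@sum1 _ _ _ k).
    rewrite dX => /eqP; rewrite -subr_eq0 -mulrBl mulf_eq0 subr_eq0 => /orP[/eqP/inj E1|/eqP //].
    by rewrite E1 eqxx in kj.
  move=> m Hm; case: (ltngtP m k) => Hmk.
  - by rewrite HX // mul0r.
  - by rewrite IH ?mulr0.
  - by exfalso; move/eqP: Hm; apply; apply: val_inj.
have up : forall m : 'I_n, (j < m)%N -> v m 0 = 0.
  suff: forall m : 'I_n, (fun m : 'I_n => (j < m)%N -> v m 0 = 0) m by [].
  apply: down_ind => k IH Hjk; apply: key.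
    by apply/eqP => E1; subst; lia.
  by move=> m Hm; apply: IH => //; lia.
exists v; split => //.
apply/negP => /eqP vj.
suff v0 : v = 0.
  have wv : w = v^T by rewrite trmxK.
  by move: w0; rewrite wv v0 trmx0 eqxx.
apply/matrixP => k l; rewrite ord1 [RHS]mxE.
move: k; suff: forall m : 'I_n, (fun m : 'I_n => v m 0 = 0) m by [].
apply: down_ind => k IH; case: (eqVneq k j) => [->//|kj].
by apply: key.
Qed.

Lemma diag_sym (K : fieldType) n (G T : 'M[K]_n) :
  (forall i j, i != j -> G i j = 0) -> T^T *m G = G *m T ->
  forall i j, G i i * T i j = T j i * G j j.
Proof.
move=> Gd TG i j; have := congr1 (fun N : 'M[K]_n => N i j) TG; rewrite !mxE.
rewrite (@sum1 _ _ _ j); last by move=> m mj; rewrite Gd ?mulr0.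
rewrite (@sum1 _ _ _ i); last by move=> m mi; rewrite Gd ?mul0r // eq_sym.
by rewrite mxE => ->.
Qed.

Lemma core (K : fieldType) n (X Y H : 'M[K]_n) (th : 'I_n -> K) :
  injective th -> utri X -> (forall i, X i i = th i) -> hess Y -> subd Y ->
  H \in unitmx -> X^T *m H = H *m X -> Y^T *m H = H *m Y ->
  exists P : 'M[K]_n, P \in unitmx /\
    irreducible_tridiagonal (invmx P *m Y *m P) /\ diagonal (invmx P *m X *m P).
Proof.
move=> inj HX dX hY sY uH XH YH.
have [f Hf] := fin_all_exists (eigvec inj HX dX).
pose P := \matrix_(i, j) f j i 0.
have uP : utri P by move=> i j Hij; rewrite mxE; case: (Hf j) => _ _ ->.
have dP : forall i, P i i != 0 by move=> i; rewrite mxE; case: (Hf i).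
have unP : P \in unitmx by apply: utri_unit.
pose Dg := diag_mx (\row_i th i).
have XP : X *m P = P *m Dg.
  apply/matrixP => i j; rewrite mul_mx_diag !mxE.
  case: (Hf j) => E _ _.
  have := congr1 (fun N : 'cV[K]_n => N i 0) E; rewrite !mxE => E'.
  by rewrite mulrC -E'; apply: eq_bigr => m _; rewrite ?mxE.
have D : invmx P *m X *m P = Dg by rewrite -mulmxA XP mulmxA mulVmx // mul1mx.
pose G := P^T *m H *m P.
have uG : G \in unitmx by rewrite !unitmx_mul unitmx_tr unP uH.
have GD : Dg *m G = G *m Dg.
  have -> : Dg *m G = (X *m P)^T *m H *m P by rewrite XP trmx_mul tr_diag_mx /G !mulmxA.
  by rewrite trmx_mul /G -!mulmxA (mulmxA X^T) XH -!mulmxA XP.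
have Gd : forall i j, i != j -> G i j = 0.
  move=> i j ij; have := congr1 (fun N : 'M[K]_n => N i j) GD.
  rewrite mul_mx_diag mul_diag_mx !mxE => /eqP; rewrite mulrC -subr_eq0 -mulrBr mulf_eq0.
  case/orP => /eqP // /eqP; rewrite subr_eq0 => /eqP /inj E; by rewrite E eqxx in ij.
have dG : forall i, G i i != 0.
  apply: utri_diag_unit => // i j Hij; apply: Gd; apply/eqP => E; subst; lia.
pose T := invmx P *m Y *m P.
have TG : T^T *m G = G *m T.
  rewrite /T /G !trmx_mul.
  have PP : (invmx P)^T *m P^T = 1%:M by rewrite -trmx_mul mulmxV // trmx1.
  rewrite -!mulmxA (mulmxA (invmx P)^T) PP mul1mx (mulmxA Y^T) YH.
  by rewrite !mulmxA -(mulmxA _ P) mulmxV // mulmx1.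
have [uI dI] := inv_utri uP unP.
have [h1 s1] := hess_mulUl uI hY.
have [hT sT] := hess_mulUr uP h1.
have sT' : subd T.
  move=> i j Hij; rewrite /T sT // s1 // dI; apply: mulf_neq0; last exact: dP.
  by apply: mulf_neq0; [rewrite invr_eq0; exact: dP | exact: sY].
have key := diag_sym Gd TG.
exists P; split => //; split; last by rewrite D; exact: diag_mx_is_diag.
split.
  move=> i j [Hij|Hij]; first exact: hT.
  have := key i j; rewrite (hT j i) // mul0r => /eqP; rewrite mulf_eq0 (negPf (dG i)) /=.
  by move/eqP.
move=> i j Hij; split; first exact: sT'.
have := key i j; move=> E.
have : G j j * T j i != 0.
  by rewrite key; apply: mulf_neq0; [exact: sT' | exact: dG].
by rewrite mulf_eq0 negb_or => /andP[].
Qed.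

Lemma symmetrizer (K : fieldType) d (T : 'M[K]_d.+1) :
  irreducible_tridiagonal T ->
  exists s : 'rV[K]_d.+1, (forall i, s 0 i != 0) /\ T^T *m diag_mx s = diag_mx s *m T.
Proof.
case=> tri irr.
pose t (m : nat) := T (inord m) (inord m.+1) / T (inord m.+1) (inord m).
pose s := \row_(k < d.+1) \prod_(m < k) t m.
have tnz : forall m, (m < d)%N -> t m != 0 /\ T (inord m.+1) (inord m) != 0.
  move=> m Hm.
  have := irr (inord m.+1) (inord m); rewrite !inordK; try lia.
  case=> // a b; split => //; rewrite /t mulf_neq0 // invr_eq0 //.
have snz : forall i, s 0 i != 0.
  move=> i; rewrite mxE; apply/prodf_neq0 => m _.
  have := ltn_ord m; have := ltn_ord i => ? ?; case: (tnz m) => //; lia.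
have step : forall i j : 'I_d.+1, (j : nat) = i.+1 -> s 0 i * T i j = T j i * s 0 j.
  move=> i j Hj; rewrite !mxE Hj big_ord_recr /=.
  have Ei : inord i = i by apply: val_inj => /=; rewrite inordK.
  have Ej : inord i.+1 = j by apply: val_inj => /=; rewrite inordK -Hj.
  have Hi : (i < d)%N by have := ltn_ord j; lia.
  case: (tnz i Hi) => _ nz.
  rewrite /t Ei Ej in nz *.
  have -> : \prod_(m < i) t (widen_ord (leqnSn i) m) = \prod_(m < i) t m by [].
  by field.
clearbody s; exists s; split => //.
apply/matrixP => i j; rewrite mul_mx_diag mul_diag_mx !mxE.
case: (ltngtP i j) => Hij.
- case: (eqVneq (j : nat) i.+1) => Hj.
    by rewrite -step // mulrC.
  move/eqP: Hj => Hj.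
  rewrite (tri i j); last by right; lia.
  by rewrite (tri j i) ?mul0r ?mulr0 //; left; lia.
- case: (eqVneq (i : nat) j.+1) => Hj.
    by rewrite mulrC step // mulrC.
  move/eqP: Hj => Hj.
  rewrite (tri i j); last by left; lia.
  by rewrite (tri j i) ?mul0r ?mulr0 //; right; lia.
- by move: Hij => /val_inj ->; rewrite mulrC.
Qed.

Lemma diag_comm (K : fieldType) n (D : 'M[K]_n) (s : 'rV[K]_n) :
  is_diag_mx D -> D^T *m diag_mx s = diag_mx s *m D.
Proof.
move/is_diag_mxP => HD; apply/matrixP => i j; rewrite mul_mx_diag mul_diag_mx !mxE.
case: (eqVneq i j) => [->|ij]; first by rewrite mulrC.
by rewrite HD ?HD ?mulr0 ?mul0r // ?(eq_sym (j : nat)) //; apply/eqP => E; move/eqP: ij; apply; apply: val_inj.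
Qed.

Lemma fwd (K : fieldType) n (M P S : 'M[K]_n) :
  P \in unitmx -> S \in unitmx ->
  (invmx P *m M *m P)^T *m S = S *m (invmx P *m M *m P) ->
  ((invmx P)^T *m S *m invmx P) \in unitmx /\
  invmx ((invmx P)^T *m S *m invmx P) *m M^T *m ((invmx P)^T *m S *m invmx P) = M.
Proof.
move=> uP uS E.
set H := (invmx P)^T *m S *m invmx P.
have uH : H \in unitmx by rewrite !unitmx_mul unitmx_tr !unitmx_inv uP uS.
split => //.
suff MH : M^T *m H = H *m M by rewrite -mulmxA MH mulmxA mulVmx // mul1mx.
have EM : M = P *m (invmx P *m M *m P) *m invmx P.
  by rewrite !mulmxA mulmxV // mul1mx -mulmxA mulmxV // mulmx1.
set T := invmx P *m M *m P in E EM.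
have PP : P^T *m (invmx P)^T = 1%:M by rewrite -trmx_mul mulVmx // trmx1.
clearbody T.
rewrite {1}EM !trmx_mul /H -!mulmxA (mulmxA P^T) PP mul1mx (mulmxA T^T) E.
by rewrite EM !mulmxA -(mulmxA _ (invmx P) P) mulVmx // mulmx1.
Qed.

Lemma irr_tr (K : fieldType) n (M : 'M[K]_n) :
  irreducible_tridiagonal M -> irreducible_tridiagonal M^T.
Proof.
case=> tri irr; split.
  by move=> i j H; rewrite mxE tri //; case: H; [right|left].
by move=> i j H; rewrite !mxE; case: (irr i j H).
Qed.

Lemma conjT (K : fieldType) n (X H : 'M[K]_n) :
  H \in unitmx -> X^T *m H = H *m X -> (X^T)^T *m invmx H = invmx H *m X^T.
Proof.
move=> uH XH; rewrite trmxK.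
have := congr1 (fun N => invmx H *m N *m invmx H) XH => /=.
rewrite !mulmxA mulVmx // mul1mx -!mulmxA mulmxV // mulmx1 => ->.
done.
Qed.

Lemma eqH (K : fieldType) n (X H : 'M[K]_n) :
  H \in unitmx -> invmx H *m X^T *m H = X -> X^T *m H = H *m X.
Proof. by move=> uH E; rewrite -{2}E !mulmxA mulmxV // mul1mx. Qed.

Unset Implicit Arguments.
Theorem theorem6p4 (K : fieldType) (d : nat)
    (theta thetas : 'I_d.+1 -> K) (phi : nat -> K)
    (htheta : injective theta) (hthetas : injective thetas)
    (hphi : forall i : nat, (1 <= i <= d)%N -> phi i != 0) :
  leonard_pair (matA theta) (matAs thetas phi) <->
  exists H : 'M[K]_d.+1, H \in unitmx /\
    invmx H *m (matA theta)^T *m H = matA theta /\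
    invmx H *m (matAs thetas phi)^T *m H = matAs thetas phi.
Proof.
split.
  case=> [[P [uP [irr dg]]] _].
  have [s [snz TS]] := symmetrizer irr.
  have uS : diag_mx s \in unitmx.
    by rewrite unitmxE unitfE det_diag; apply/prodf_neq0 => i _.
  have [uH E1] := fwd uP uS TS.
  have [_ E2] := fwd uP uS (diag_comm s dg).
  by exists ((invmx P)^T *m diag_mx s *m invmx P).
case=> H [uH [E1 E2]].
have AH := eqH uH E1.
have AsH := eqH uH E2.
have uAs : utri (matAs thetas phi).
  move=> i j Hij; rewrite mxE; case: eqP => [E|_]; first by subst; lia.
  by case: eqP => // E; lia.
have dAs : forall i, matAs thetas phi i i = thetas i by move=> i; rewrite mxE eqxx.
have hA : hess (matA theta).
  move=> i j Hij; rewrite mxE; case: eqP => [E|_]; first by subst; lia.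
  by case: eqP => // E; lia.
have sA : subd (matA theta).
  move=> i j Hij; rewrite mxE.
  have -> : (i == j) = false by apply/eqP=> E; move: Hij; rewrite E; lia.
  by rewrite Hij eqxx oner_neq0.
have uAt : utri (matA theta)^T.
  move=> i j Hij; rewrite !mxE; case: eqP => [E|_]; first by subst; lia.
  by case: eqP => // E; lia.
have dAt : forall i, (matA theta)^T i i = theta i by move=> i; rewrite !mxE eqxx.
have hAs : hess (matAs thetas phi)^T.
  move=> i j Hij; rewrite !mxE; case: eqP => [E|_]; first by subst; lia.
  by case: eqP => // E; lia.
have sAs : subd (matAs thetas phi)^T.
  move=> i j Hij; rewrite !mxE.
  have -> : (j == i) = false by apply/eqP=> E; move: Hij; rewrite E; lia.
  rewrite Hij eqxx -Hij; apply: hphi; have := ltn_ord i; lia.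
have [P [uP [irrP dP]]] := core hthetas uAs dAs hA sA uH AsH AH.
have uHi : invmx H \in unitmx by rewrite unitmx_inv.
have [Q [uQ [irrQ dQ]]] :=
  core htheta uAt dAt hAs sAs uHi (conjT uH AH) (conjT uH AsH).
split; first by exists P.
exists (invmx Q)^T.
have iQ : invmx (invmx Q)^T = Q^T by rewrite trmx_inv invmxK.
have tr : forall M : 'M[K]_d.+1, invmx (invmx Q)^T *m M *m (invmx Q)^T = (invmx Q *m M^T *m Q)^T.
  by move=> M; rewrite iQ !trmx_mul trmxK mulmxA.
split; first by rewrite unitmx_tr unitmx_inv.
rewrite !tr; split; first exact: irr_tr.
by rewrite /diagonal is_diag_trmx.
Qed.
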